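(* Let $d\ge 1$ and let $X=\{x_1,\dots,x_N\}$ be a finite nonempty subset of the unit sphere $S^d\subset\mathbb{R}^{d+1}$ satisfying \[ \frac{1}{|X|^2}\sum_{x_i,x_j\in X}(x_i,x_j)^2=\frac{1}{d+1},\qquad \frac{1}{|X|^2}\sum_{x_i,x_j\in X}(x_i,x_j)^4=\frac{3}{(d+3)(d+1)}, \] where both sums run over all ordered pairs $(i,j)$, $1\le i,j\le N$ (including $i=j$). Then the multiset $\widetilde{G_X}:=\{G_{x_1},\dots,G_{x_N}\}\cup\{-G_{x_1},\dots,-G_{x_N}\}$ (of $2N$ points, counted with multiplicity) is a spherical $3$-design in the unit sphere $S^{D-1}$ of $\mathrm{Harm}_2(S^d)\cong\mathbb{R}^D$, where $D=\dim \mathrm{Harm}_2(S^d)=d(d+3)/2$.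
   Context: $(\cdot,\cdot)$ is the standard inner product on $\mathbb{R}^{d+1}$. $\mathrm{Harm}_2(S^d)$ denotes the real vector space of restrictions to $S^d$ of homogeneous polynomials $P$ of degree $2$ on $\mathbb{R}^{d+1}$ that are harmonic ($\sum_{j}\partial^2P/\partial x_j^2=0$); its dimension is $D=d(d+3)/2$. Equip it with the inner product $\langle P,Q\rangle=\int_{S^d}P(x)Q(x)\,d\sigma(x)$, $\sigma$ the normalized surface measure, and identify it with $\mathbb{R}^D$ via an orthonormal basis. For $x\in S^d$ let $K_x\in\mathrm{Harm}_2(S^d)$ be the reproducing element ($\langle K_x,Q\rangle=Q(x)$ for all $Q$), and set $G_x=K_x/\|K_x\|$; then $G_x$ is a unit vector and $\langle G_x,G_y\rangle=g_{2,d}((x,y))$ with $g_{2,d}(t)=\frac{d+1}{d}t^2-\frac1d$. A finite nonempty multiset $Y$ in a unit sphere $S^{m}\subset\mathbb{R}^{m+1}$ is a spherical $t$-design if $\frac{1}{|Y|}\sum_{y\in Y}f(y)=\int_{S^m}f\,d\sigma$ for every polynomial $f$ on $\mathbb{R}^{m+1}$ of degree at most $t$ (points counted with multiplicity, $\sigma$ normalized surface measure). *)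

(* Defs.v *)
From HB Require Import structures.
From mathcomp Require Import all_boot all_order all_algebra.
Set Implicit Arguments. Unset Strict Implicit. Unset Printing Implicit Defensive.
Import Order.TTheory GRing.Theory Num.Theory.
Local Open Scope ring_scope.

Section Defs.
Variable R : rcfType.

Definition dotv n (x y : 'rV[R]_n) : R := \sum_(i < n) x 0 i * y 0 i.

Definition on_sphere n (x : 'rV[R]_n) : bool := dotv x x == 1.

(** Polynomials on R^n, represented as finite lists of monomials
    (coefficient, exponent vector). *)
Definition expo n := {ffun 'I_n -> nat}.
Definition polyR n := seq (R * expo n).

Definition mono_eval n (a : expo n) (x : 'rV[R]_n) : R := \prod_(i < n) x 0 i ^+ a i.
Definition peval n (p : polyR n) (x : 'rV[R]_n) : R :=
  \sum_(m <- p) m.1 * mono_eval m.2 x.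
Definition expo_deg n (a : expo n) : nat := (\sum_(i < n) a i)%N.
Definition pdeg_le n (p : polyR n) (t : nat) : bool :=
  all (fun m => expo_deg m.2 <= t)%N p.
Definition padd_expo n (a b : expo n) : expo n := [ffun i => (a i + b i)%N].
Definition pmul n (p q : polyR n) : polyR n :=
  [seq (u.1 * v.1, padd_expo u.2 v.2) | u <- p, v <- q].

(** Integral of the monomial x^a over S^(n-1) against the normalized surface
    measure: 0 unless all a_i are even; otherwise, with a_i = 2 b_i,
    prod_i (2b_i - 1)!! / (n (n+2) ... (n + 2|b| - 2)). *)
Definition sphere_mono_avg n (a : expo n) : R :=
  if [forall i, ~~ odd (a i)] then
    (\prod_(i < n) \prod_(j < (a i)./2) ((2 * j).+1)%:R) /
    (\prod_(k < (expo_deg a)./2) (n + 2 * k)%:R)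
  else 0.

Definition sphere_avg n (p : polyR n) : R :=
  \sum_(m <- p) m.1 * sphere_mono_avg m.2.

(** Spherical t-design in S^(n-1) subset R^n (multiset = seq). *)
Definition spherical_design n (t : nat) (Y : seq 'rV[R]_n) : Prop :=
  [/\ Y != [::], all (@on_sphere n) Y &
    forall p : polyR n, pdeg_le p t ->
      (size Y)%:R^-1 * \sum_(y <- Y) peval p y = sphere_avg p].

Definition unit_expo n (i : 'I_n) : expo n := [ffun k => (k == i : nat)].
Definition quad_poly m (A : 'M[R]_m) : polyR m :=
  [seq (A i j, padd_expo (unit_expo i) (unit_expo j)) | i <- enum 'I_m, j <- enum 'I_m].

(** Harm_2 on S^(m-1): homogeneous quadratic polynomials x A x^T, A symmetric
    (unique representative), harmonic (Laplacian = 2 tr A = 0). *)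
Definition harm2 m (A : 'M[R]_m) : bool := (A^T == A) && (\tr A == 0).

Definition harm_inner m (A B : 'M[R]_m) : R :=
  sphere_avg (pmul (quad_poly A) (quad_poly B)).

End Defs.

(* Main.v *)
Require Import Defs.
From HB Require Import structures.
From mathcomp Require Import all_boot all_order all_algebra.
From mathcomp Require Import ring lra.
Set Implicit Arguments. Unset Strict Implicit. Unset Printing Implicit Defensive.
Import Order.TTheory GRing.Theory Num.Theory.
Local Open Scope ring_scope.

Section S.
Variable R : rcfType.

Lemma sphere_avg_pmul n (p q : polyR R n) :
  sphere_avg (pmul p q) = \sum_(u <- p) \sum_(v <- q) u.1 * v.1 * sphere_mono_avg R (padd_expo u.2 v.2).
Proof. by rewrite /sphere_avg /pmul big_allpairs_dep. Qed.

Lemma sum_quad n (A : 'M[R]_n) (F : R * expo n -> R) :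
  \sum_(u <- quad_poly A) F u = \sum_i \sum_j F (A i j, padd_expo (unit_expo i) (unit_expo j)).
Proof.
rewrite /quad_poly big_allpairs_dep big_enum /=; apply: eq_bigr => i _.
by rewrite big_enum.
Qed.

Definition a4 n (i j k l : 'I_n) : expo n :=
  padd_expo (padd_expo (unit_expo i) (unit_expo j)) (padd_expo (unit_expo k) (unit_expo l)).

Lemma harm_inner_sum n (A B : 'M[R]_n) :
  harm_inner A B = \sum_i \sum_j \sum_k \sum_l A i j * B k l * sphere_mono_avg R (a4 i j k l).
Proof.
rewrite /harm_inner sphere_avg_pmul sum_quad; apply: eq_bigr => i _.
apply: eq_bigr => j _; by rewrite sum_quad.
Qed.

Lemma a4E n (i j k l m : 'I_n) :
  a4 i j k l m = ((m == i) + (m == j) + ((m == k) + (m == l)))%N.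
Proof. by rewrite /a4 !ffunE. Qed.

Lemma sum_unit n (i : 'I_n) : (\sum_(m < n) (m == i : nat))%N = 1%N.
Proof. by rewrite (bigD1 i) //= eqxx big1 // => m /negPf ->. Qed.

Lemma deg4 n (i j k l : 'I_n) : expo_deg (a4 i j k l) = 4%N.
Proof.
rewrite /expo_deg (eq_bigr _ (fun m _ => a4E i j k l m)) !big_split /=.
by rewrite !sum_unit.
Qed.

Definition prodg n (a : expo n) : R :=
  \prod_(i < n) \prod_(j < (a i)./2) ((2 * j).+1)%:R.

Lemma num1 n (a : expo n) : (forall m, a m <= 3)%N -> prodg a = 1.
Proof.
move=> h; rewrite /prodg big1 // => m _.
have : ((a m)./2 <= 1)%N by move: (h m); case: (a m) => [|[|[|[|]]]].
case: ((a m)./2) => [|[|//]] _; first by rewrite big_ord0.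
by rewrite big_ord1 /= muln0.
Qed.

Definition T4 n (i j k l : 'I_n) : nat :=
  ((i == j) * (k == l) + (i == k) * (j == l) + (i == l) * (j == k))%N.

Lemma sma4 n (i j k l : 'I_n) :
  sphere_mono_avg R (a4 i j k l) = (T4 i j k l)%:R / (n * (n + 2))%:R.
Proof.
rewrite /sphere_mono_avg deg4 /=.
have -> : \prod_(k0 < 2) (n + 2 * k0)%:R = (n * (n + 2))%:R :> R.
  by rewrite !big_ord_recl big_ord0 /= mulr1 -natrM muln0 addn0 muln1.
rewrite -/(prodg _).
case: (eqVneq i j) => [<-|hij].
- case: (eqVneq k l) => [<-|hkl].
  + case: (eqVneq i k) => [<-|hik].
    * rewrite (_ : [forall m, _] = true); last first.
        by apply/forallP => m; rewrite a4E; case: (m == i).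
      congr (_ / _); rewrite /T4 eqxx /prodg (bigD1 i) //= [\prod_(i0 < n | i0 != i) _]big1 ?mulr1.
        by rewrite a4E eqxx /= !big_ord_recl big_ord0 /= mul1r mulr1.
      by move=> m /negPf hm; rewrite a4E hm /= big_ord0.
    * rewrite (_ : [forall m, _] = true); last first.
        by apply/forallP => m; rewrite a4E; case: (m == i); case: (m == k).
      rewrite num1 /T4 ?eqxx ?(negPf hik) ?muln0 //.
      move=> m; rewrite a4E; case: (eqVneq m i) => [->|hmi].
        by rewrite ?eqxx ?(negPf hik).
      by rewrite ?(negPf hmi); case: (m == k).
  + rewrite (_ : [forall m, _] = false); last first.
      apply/negbTE/forallPn; exists k; rewrite a4E eqxx (negPf hkl).
      by case: (k == i).
    by rewrite /T4 eqxx (negPf hkl); case: (eqVneq i k) => [->|h]; rewrite ?(negPf hkl) ?(negPf h) /= ?muln0 ?mul0n ?addn0 ?mul0r.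
- case: (eqVneq i k) => [<-|hik].
  + case: (eqVneq j l) => [<-|hjl].
    * rewrite (_ : [forall m, _] = true); last first.
        by apply/forallP => m; rewrite a4E; case: (m == i); case: (m == j).
      rewrite num1 /T4 ?eqxx ?(negPf hij) ?muln0 //.
      move=> m; rewrite a4E; case: (eqVneq m i) => [->|hmi].
        by rewrite ?eqxx ?(negPf hij).
      by rewrite ?(negPf hmi); case: (m == j).
    * rewrite (_ : [forall m, _] = false); last first.
        apply/negbTE/forallPn; exists j; rewrite a4E eqxx (eq_sym j i) (negPf hij) (negPf hjl).
        by [].
      by rewrite /T4 (eq_sym j i) (negPf hij) (negPf hjl) /= ?muln0 ?mul0n ?mul0r.
  + case: (eqVneq i l) => [<-|hil].
    * case: (eqVneq j k) => [<-|hjk].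
      - rewrite (_ : [forall m, _] = true); last first.
          by apply/forallP => m; rewrite a4E; case: (m == i); case: (m == j).
        rewrite num1 /T4 ?eqxx ?(negPf hij) ?(negPf hik) //.
        move=> m; rewrite a4E; case: (eqVneq m i) => [->|hmi].
          by rewrite ?eqxx ?(negPf hij).
        by rewrite ?(negPf hmi); case: (m == j).
      - rewrite (_ : [forall m, _] = false); last first.
          apply/negbTE/forallPn; exists j; rewrite a4E eqxx (eq_sym j i) (negPf hij) (negPf hjk).
          by [].
        by rewrite /T4 (negPf hij) (negPf hjk) (negPf hik) /= ?muln0 ?mul0n ?mul0r.
    * rewrite (_ : [forall m, _] = false); last first.
        apply/negbTE/forallPn; exists i; rewrite a4E eqxx (negPf hij) (negPf hik) (negPf hil).
        by [].
      by rewrite /T4 (negPf hij) (negPf hik) (negPf hil) /= ?muln0 ?mul0n ?mul0r.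
Qed.

Lemma sum_delta_r n (F : 'I_n -> R) k : \sum_l F l * (k == l)%:R = F k.
Proof.
rewrite (bigD1 k) //= eqxx mulr1 big1 ?addr0 // => l hl.
by rewrite eq_sym (negPf hl) mulr0.
Qed.

Lemma sum_delta_l n (F : 'I_n -> R) k : \sum_l (k == l)%:R * F l = F k.
Proof. by rewrite -[RHS](sum_delta_r F k); apply: eq_bigr => l _; rewrite mulrC. Qed.

Lemma inner_kl n (B : 'M[R]_n) i j :
  \sum_k \sum_l B k l * (T4 i j k l)%:R = (i == j)%:R * \tr B + B i j + B j i.
Proof.
rewrite /T4.
under eq_bigr => k _ do under eq_bigr => l _ do rewrite !natrD !natrM !mulrDr.
under eq_bigr => k _ do rewrite !big_split /=.
rewrite !big_split /=.
congr (_ + _ + _).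
- under eq_bigr => k _ do under eq_bigr => l _ do rewrite mulrCA.
  under eq_bigr => k _ do rewrite -mulr_sumr sum_delta_r.
  by rewrite -mulr_sumr.
- under eq_bigr => k _ do under eq_bigr => l _ do rewrite mulrCA.
  under eq_bigr => k _ do rewrite -mulr_sumr (sum_delta_r (fun l => B k l)).
  by rewrite (sum_delta_l (fun k => B k j)).
- under eq_bigr => k _ do under eq_bigr => l _ do rewrite [X in _ * X]mulrC mulrCA.
  under eq_bigr => k _ do rewrite -mulr_sumr (sum_delta_r (fun l => B k l)).
  by rewrite (sum_delta_l (fun k => B k i)).
Qed.

Definition frob n (A B : 'M[R]_n) := \sum_i \sum_j A i j * B i j.

Lemma HI n (A B : 'M[R]_n) : harm2 B ->
  harm_inner A B = 2 / (n * (n + 2))%:R * frob A B.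
Proof.
case/andP => /eqP hT /eqP htr.
rewrite harm_inner_sum /frob mulr_sumr; apply: eq_bigr => i _.
rewrite mulr_sumr; apply: eq_bigr => j _.
rewrite (eq_bigr (fun k => A i j / (n * (n + 2))%:R * \sum_l B k l * (T4 i j k l)%:R)); last first.
  by move=> k _; rewrite mulr_sumr; apply: eq_bigr => l _; rewrite sma4; ring.
rewrite -mulr_sumr inner_kl htr mulr0 add0r.
have -> : B j i = B i j by rewrite -{1}hT mxE.
ring.
Qed.

Lemma frobB n (A B C : 'M[R]_n) : frob (A - B) C = frob A C - frob B C.
Proof.
rewrite /frob -sumrB; apply: eq_bigr => i _; rewrite -sumrB; apply: eq_bigr => j _.
by rewrite !mxE mulrBl.
Qed.

Lemma frobZ n a (A C : 'M[R]_n) : frob (a *: A) C = a * frob A C.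
Proof.
rewrite /frob mulr_sumr; apply: eq_bigr => i _; rewrite mulr_sumr; apply: eq_bigr => j _.
by rewrite !mxE mulrA.
Qed.

Lemma frobC n (A C : 'M[R]_n) : frob A C = frob C A.
Proof. by rewrite /frob; apply: eq_bigr => i _; apply: eq_bigr => j _; rewrite mulrC. Qed.

Lemma frob_sumr n (I : finType) (c : I -> R) (E : I -> 'M[R]_n) (A : 'M[R]_n) :
  frob A (\sum_k c k *: E k) = \sum_k c k * frob A (E k).
Proof.
rewrite /frob.
under eq_bigr => i _ do under eq_bigr => j _ do rewrite summxE big_distrr /=.
under eq_bigr => i _ do rewrite exchange_big /=.
rewrite exchange_big /=; apply: eq_bigr => k _.
rewrite mulr_sumr; apply: eq_bigr => i _.
rewrite mulr_sumr; apply: eq_bigr => j _.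
by rewrite mxE; ring.
Qed.

Definition Pm n (y : 'rV[R]_n) : 'M[R]_n :=
  \matrix_(i, j) (y 0 i * y 0 j - (i == j)%:R / n%:R).

Lemma sum_inv n : (0 < n)%N -> \sum_(i < n) 1 / n%:R = 1 :> R.
Proof.
move=> hn; rewrite sumr_const card_ord -[_ *+ n]mulr_natr mul1r mulVf //.
by rewrite pnatr_eq0 -lt0n.
Qed.

Lemma P_harm2 n (y : 'rV[R]_n) : (0 < n)%N -> on_sphere y -> harm2 (Pm y).
Proof.
move=> hn /eqP hy; apply/andP; split.
  by apply/eqP/matrixP => i j; rewrite !mxE mulrC eq_sym.
rewrite /mxtrace; under eq_bigr => i _ do rewrite mxE eqxx /= mulr1n.
by rewrite sumrB sum_inv // subr_eq0 -hy.
Qed.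

Lemma frobPQ n (y : 'rV[R]_n) Q : harm2 Q -> frob (Pm y) Q = (y *m Q *m y^T) 0 0.
Proof.
case/andP => _ /eqP htr.
rewrite /frob mxE.
under eq_bigr => i _ do under eq_bigr => j _ do rewrite mxE mulrBl.
under eq_bigr => i _ do rewrite sumrB.
rewrite sumrB.
have -> : \sum_i \sum_j (i == j)%:R / n%:R * Q i j = 0.
  rewrite (eq_bigr (fun i => n%:R^-1 * Q i i)); last first.
    move=> i _; rewrite -(sum_delta_l (fun j => n%:R^-1 * Q i j)); apply: eq_bigr => j _.
    by rewrite mulrA.
  by rewrite -mulr_sumr; change (\sum_i Q i i) with (\tr Q); rewrite htr mulr0.
rewrite subr0 exchange_big /=; apply: eq_bigr => j _.
rewrite !mxE mulr_suml; apply: eq_bigr => i _.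
by ring.
Qed.

Lemma frobPP n (x y : 'rV[R]_n) : (0 < n)%N -> on_sphere x -> on_sphere y ->
  frob (Pm x) (Pm y) = dotv x y ^+ 2 - 1 / n%:R.
Proof.
move=> hn hx hy.
have hPy := P_harm2 hn hy.
rewrite frobPQ // /dotv.
rewrite (_ : (x *m Pm y *m x^T) 0 0 = \sum_j \sum_i x 0 i * Pm y i j * x 0 j); last first.
  rewrite mxE; apply: eq_bigr => j _; rewrite !mxE mulr_suml; apply: eq_bigr => i _.
  by rewrite mxE.
under eq_bigr => j _ do under eq_bigr => i _ do rewrite mxE.
have hx' := hx; move/eqP: hx' => hx'; rewrite /dotv in hx'.
have hy' := hy; move/eqP: hy' => hy'; rewrite /dotv in hy'.
under eq_bigr => j _ do under eq_bigr => i _ do rewrite mulrBr mulrBl.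
under eq_bigr => j _ do rewrite sumrB.
rewrite sumrB.
have -> : \sum_j \sum_i x 0 i * ((i == j)%:R / n%:R) * x 0 j = 1 / n%:R.
  rewrite (eq_bigr (fun j => x 0 j * x 0 j / n%:R)); last first.
    move=> j _; rewrite -(sum_delta_l (fun i => x 0 i * x 0 j / n%:R) j).
    by apply: eq_bigr => i _; rewrite eq_sym; ring.
  by rewrite -mulr_suml hx'.
congr (_ - _).
rewrite expr2 mulr_suml; apply: eq_bigr => j _; rewrite mulr_sumr; apply: eq_bigr => i _.
ring.
Qed.

Lemma harm2_lin n (A B : 'M[R]_n) c : harm2 A -> harm2 B -> harm2 (A - c *: B).
Proof.
case/andP => /eqP hA /eqP tA; case/andP => /eqP hB /eqP tB; apply/andP; split.
  have hA' k l : A k l = A l k by rewrite -{1}hA mxE.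
  have hB' k l : B k l = B l k by rewrite -{1}hB mxE.
  by apply/eqP/matrixP => i j; rewrite !mxE hA' hB'.
by rewrite raddfB /= mxtraceZ tA tB mulr0 subr0.
Qed.

Lemma harm2Z n (A : 'M[R]_n) c : harm2 A -> harm2 (c *: A).
Proof.
case/andP => /eqP hA /eqP tA; apply/andP; split.
  have hA' k l : A k l = A l k by rewrite -{1}hA mxE.
  by apply/eqP/matrixP => i j; rewrite !mxE hA'.
by rewrite mxtraceZ tA mulr0.
Qed.

Lemma K_eq n D (E : 'I_D -> 'M[R]_n) (Kx : 'M[R]_n) y :
  (0 < n)%N -> on_sphere y -> harm2 Kx ->
  (forall Q, harm2 Q -> harm_inner Kx Q = (y *m Q *m y^T) 0 0) ->
  (forall i, harm2 (E i)) ->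
  (forall Q, harm2 Q -> Q = \sum_i harm_inner Q (E i) *: E i) ->
  Kx = ((n * (n + 2))%:R / 2) *: Pm y.
Proof.
move=> hn hy hK hrep hE hspan.
have hD := harm2_lin ((n * (n + 2))%:R / 2) hK (P_harm2 hn hy).
apply/eqP; rewrite -subr_eq0; apply/eqP; rewrite (hspan _ hD) big1 // => i _.
have hn2 : (n * (n + 2))%:R != 0 :> R by rewrite pnatr_eq0 muln_eq0 negb_or -lt0n hn addn2.
rewrite HI // frobB frobZ.
have h := hrep _ (hE i); rewrite HI // -frobPQ // in h.
rewrite (_ : _ * _ = 0) ?scale0r //.
rewrite mulrBr h mulrA (_ : 2 / _ * (_ / 2) = 1) ?mul1r ?subrr //.
field; have hn' : 0 < n%:R :> R by rewrite ltr0n.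
by apply/andP; split; apply/eqP => h0; lra.
Qed.

Lemma parseval n D (E : 'I_D -> 'M[R]_n) (A B : 'M[R]_n) :
  (forall i, harm2 (E i)) ->
  (forall Q, harm2 Q -> Q = \sum_i harm_inner Q (E i) *: E i) -> harm2 B ->
  harm_inner A B = \sum_i harm_inner A (E i) * harm_inner B (E i).
Proof.
move=> hE hspan hB.
rewrite HI // {1}(hspan B hB) frob_sumr mulr_sumr; apply: eq_bigr => i _.
by rewrite (HI A (hE i)); ring.
Qed.

Lemma monoN D (a : expo D) (z : 'rV[R]_D) :
  mono_eval a (- z) = (-1) ^+ expo_deg a * mono_eval a z.
Proof.
rewrite /mono_eval /expo_deg -prodrXr -big_split /=; apply: eq_bigr => i _.
have -> : (- z) 0 i = - z 0 i by rewrite -scaleN1r mxE mulN1r.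
by rewrite [LHS]exprNn.
Qed.

Lemma deg_even_all D (a : expo D) : [forall i, ~~ odd (a i)] -> ~~ odd (expo_deg a).
Proof.
move/forallP => h; rewrite /expo_deg; apply: (big_ind (fun s => ~~ odd s)) => //.
by move=> x y hx hy; rewrite oddD; move: hx hy; case: (odd x); case: (odd y).
Qed.

Lemma deg0 D (a : expo D) : expo_deg a = 0%N -> forall i, a i = 0%N.
Proof.
move/eqP; rewrite /expo_deg sum_nat_eq0 => /forallP h i.
by move: (h i) => /implyP /(_ isT) /eqP.
Qed.

Lemma deg_succ D (a : expo D) k : expo_deg a = k.+1 ->
  exists i, exists2 b : expo D, (forall m, a m = (m == i) + b m)%N & expo_deg b = k.
Proof.
move=> hk; case: (pickP (fun i => 0 < a i)%N) => [i hi|h0]; last first.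
  have : expo_deg a = 0%N.
    by rewrite /expo_deg big1 // => m _; move: (h0 m); case: (a m).
  by rewrite hk.
have hb : forall m, a m = ((m == i) + [ffun m => (a m - (m == i))%N] m)%N.
  move=> m; rewrite ffunE; case: (eqVneq m i) => [->|hm] /=.
    by rewrite add1n subn1 prednK.
  by rewrite add0n subn0.
exists i; exists [ffun m => (a m - (m == i))%N] => //.
have : expo_deg a = (1 + expo_deg [ffun m => (a m - (m == i))%N])%N.
  by rewrite /expo_deg -(sum_unit i) -big_split /=; apply: eq_bigr => m _.
by rewrite hk add1n => [[]].
Qed.

Lemma deg2 D (a : expo D) : expo_deg a = 2%N ->
  exists i j, forall m, a m = ((m == i) + (m == j))%N.
Proof.
case/deg_succ => i [b hb] /deg_succ [j [c hc /deg0 h0]].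
by exists i, j => m; rewrite hb hc h0 addn0.
Qed.

Lemma mono_unit D (z : 'rV[R]_D) j :
  \prod_(m < D) z 0 m ^+ (m == j) = z 0 j.
Proof.
by rewrite (bigD1 j) //= eqxx expr1 big1 ?mulr1 // => m /negPf ->.
Qed.

Lemma frame_pt D (Z : seq 'rV[R]_D) : (0 < D)%N -> (0 < size Z)%N ->
  (forall z, z \in Z -> dotv z z = 1) ->
  (size Z)%:R ^- 2 * \sum_(z <- Z) \sum_(w <- Z) dotv z w ^+ 2 = D%:R^-1 ->
  forall i j, \sum_(z <- Z) z 0 i * z 0 j = (i == j)%:R * ((size Z)%:R / D%:R).
Proof.
move=> hD hN hunit hfr.
set N := (size Z)%:R; set c := N / D%:R.
have hN0 : N != 0 by rewrite pnatr_eq0 -lt0n.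
have hD0 : D%:R != 0 :> R by rewrite pnatr_eq0 -lt0n.
set M := fun i j => \sum_(z <- Z) z 0 i * z 0 j.
have A2 : \sum_i \sum_j M i j ^+ 2 = N ^+ 2 / D%:R.
  have -> : \sum_i \sum_j M i j ^+ 2 = \sum_(z <- Z) \sum_(w <- Z) dotv z w ^+ 2.
    rewrite /M /dotv.
    under eq_bigr => i _ do under eq_bigr => j _ do rewrite expr2 mulr_suml.
    under eq_bigr => i _ do under eq_bigr => j _ do under eq_bigr => z _ do rewrite mulr_sumr.
    under eq_bigr => i _ do rewrite exchange_big /=.
    rewrite exchange_big /=; apply: eq_bigr => z _.
    under eq_bigr => i _ do rewrite exchange_big /=.
    rewrite exchange_big /=; apply: eq_bigr => w _.
    rewrite expr2 mulr_suml; apply: eq_bigr => i _.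
    rewrite mulr_sumr; apply: eq_bigr => j _; ring.
  move: hfr; rewrite -/N => hfr.
  rewrite -[LHS]mul1r -(mulfV (expf_neq0 2 hN0)) -mulrA hfr; by field; rewrite hD0 andbT.
have A1 : \sum_i \sum_j (i == j)%:R * M i j = N.
  rewrite (eq_bigr (fun i => M i i)); last by move=> i _; rewrite sum_delta_l.
  rewrite /M exchange_big /= /N -sum1_size natr_sum; apply: eq_big_seq => z hz.
  by rewrite -(hunit z hz).
have A0 : \sum_(i < D) \sum_(j < D) (i == j)%:R = D%:R :> R.
  rewrite (eq_bigr (fun _ => (1 : R))); last first.
    by move=> i _; rewrite -[RHS](sum_delta_l (fun _ => (1 : R)) i); apply: eq_bigr => j _; rewrite mulr1.
  by rewrite sumr_const card_ord.
have sq : forall (m : R) (b : bool), (m - b%:R * c) ^+ 2 = m ^+ 2 - 2 * c * (b%:R * m) + c ^+ 2 * b%:R.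
  by move=> m [] /=; ring.
have hS : \sum_i \sum_j (M i j - (i == j)%:R * c) ^+ 2 = 0.
  under eq_bigr => i _ do under eq_bigr => j _ do rewrite sq.
  under eq_bigr => i _ do rewrite big_split /= sumrB -!mulr_sumr.
  rewrite big_split /= sumrB A2 -!mulr_sumr A1 A0 /c.
  by field; rewrite hD0.
move=> i j; apply/eqP; rewrite -subr_eq0 -sqrf_eq0; apply/eqP.
have h1 := psumr_eq0P (fun i _ => sumr_ge0 _ (fun j _ => sqr_ge0 (M i j - (i == j)%:R * c))) hS.
have h2 := h1 i isT.
apply: (psumr_eq0P _ h2) => // k _; exact: sqr_ge0.
Qed.

Lemma oppE D (z : 'rV[R]_D) i : (- z) 0 i = - z 0 i.
Proof. by rewrite -scaleN1r mxE mulN1r. Qed.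

Lemma mono_avg D (Z : seq 'rV[R]_D) (a : expo D) : (0 < D)%N -> (0 < size Z)%N ->
  (forall i j, \sum_(z <- Z) z 0 i * z 0 j = (i == j)%:R * ((size Z)%:R / D%:R)) ->
  (expo_deg a <= 3)%N ->
  (size (Z ++ [seq - z | z <- Z]))%:R^-1 * \sum_(y <- Z ++ [seq - z | z <- Z]) mono_eval a y
  = sphere_mono_avg R a.
Proof.
move=> hD hN hfr hdeg.
have hN0 : (size Z)%:R != 0 :> R by rewrite pnatr_eq0 -lt0n.
have hD0 : D%:R != 0 :> R by rewrite pnatr_eq0 -lt0n.
rewrite big_cat big_map /= size_cat size_map.
under [X in _ + X]eq_bigr => z _ do rewrite monoN -signr_odd.
case: (boolP (odd (expo_deg a))) => hodd.
  rewrite expr1.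
  under [X in _ + X]eq_bigr => z _ do rewrite mulN1r.
  rewrite sumrN addrN mulr0 /sphere_mono_avg ifF //.
  by apply/negP => h; move: (deg_even_all h); rewrite hodd.
rewrite expr0.
under [X in _ + X]eq_bigr => z _ do rewrite mul1r.
have : expo_deg a = 0%N \/ expo_deg a = 2%N.
  by move: hdeg hodd; case: (expo_deg a) => [|[|[|[|]]]] //; auto.
case=> hd.
- have h0 := deg0 hd.
  rewrite (eq_bigr (fun _ => 1)); last first.
    by move=> z _; rewrite /mono_eval big1 // => i _; rewrite h0 expr0.
  have hs : \sum_(z <- Z) (1 : R) = (size Z)%:R by rewrite -sum1_size natr_sum.
  rewrite hs.
  rewrite /sphere_mono_avg ifT; last by apply/forallP => i; rewrite h0.
  rewrite -/(prodg _) num1 ?hd /= ?big_ord0; last by move=> m; rewrite h0.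
  by rewrite -natrD mulVf ?divr1 // pnatr_eq0 addn_eq0 andbb -lt0n.
- case: (deg2 hd) => i [j ha].
  have hm : forall z : 'rV[R]_D, mono_eval a z = z 0 i * z 0 j.
    move=> z; rewrite /mono_eval; under eq_bigr => m _ do rewrite ha exprD.
    by rewrite big_split /= !mono_unit.
  under eq_bigr => z _ do rewrite hm.
  rewrite hfr /sphere_mono_avg hd /= big_ord1 muln0 addn0 -/(prodg _).
  case: (eqVneq i j) => [e|hij]; first subst j.
    rewrite ifT; last by apply/forallP => m; rewrite ha; case: (m == i).
    rewrite num1; last by move=> m; rewrite ha; case: (m == i).
    rewrite /= mulr1n mul1r natrD.
    by field; rewrite hD0 -natrD pnatr_eq0 addn_eq0 andbb -lt0n.
  rewrite ifF; last first.
    apply/negbTE/forallPn; exists i; rewrite ha eqxx; move: hij; case: eqP => //.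
  have -> : (false%:R : R) = 0 by [].
  by rewrite !mul0r addr0 mulr0.
Qed.

Lemma design_core D (Z : seq 'rV[R]_D) : (0 < D)%N -> Z != [::] ->
  (forall z, z \in Z -> dotv z z = 1) ->
  (size Z)%:R ^- 2 * \sum_(z <- Z) \sum_(w <- Z) dotv z w ^+ 2 = D%:R^-1 ->
  spherical_design 3 (Z ++ [seq - z | z <- Z]).
Proof.
move=> hD hZ hunit hfr.
have hN : (0 < size Z)%N by case: Z hZ {hunit hfr}.
have hpt := frame_pt hD hN hunit hfr.
split.
- by case: Z hZ {hunit hfr hN hpt}.
- rewrite all_cat; apply/andP; split; apply/allP => y.
    by move=> hy; apply/eqP; apply: hunit.
  case/mapP => z hz ->; apply/eqP; rewrite -(hunit z hz) /dotv.
  by apply: eq_bigr => i _; rewrite oppE mulrNN.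
- move=> p hp; rewrite /peval /sphere_avg exchange_big /= mulr_sumr.
  apply: eq_big_seq => m hm.
  rewrite -mulr_sumr mulrCA (@mono_avg D Z m.2 hD hN hpt) //.
  by move/allP: hp => /(_ m hm).
Qed.

Lemma HIZ n (A B : 'M[R]_n) a b : harm2 B ->
  harm_inner (a *: A) (b *: B) = a * b * harm_inner A B.
Proof.
move=> hB; rewrite HI ?harm2Z // HI // frobZ frobC frobZ frobC; ring.
Qed.

Lemma sum_const_seq T (X : seq T) (g : R) : \sum_(x <- X) g = g * (size X)%:R.
Proof.
rewrite -sum1_size natr_sum mulr_sumr; apply: eq_bigr => x _; by rewrite mulr1.
Qed.

Lemma sum2_lin T (X : seq T) (f g : T -> T -> R) al be ga :
  \sum_(x <- X) \sum_(y <- X) (al * f x y + be * g x y + ga) =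
  al * \sum_(x <- X) \sum_(y <- X) f x y + be * \sum_(x <- X) \sum_(y <- X) g x y
  + ga * (size X)%:R ^+ 2.
Proof.
under eq_bigr => x _ do rewrite !big_split /= -!mulr_sumr sum_const_seq.
rewrite !big_split /= -!mulr_sumr sum_const_seq; ring.
Qed.

Lemma half_even d : (((d * (d + 3))./2) * 2 = d * (d + 3))%N.
Proof.
have := odd_double_half (d * (d + 3)).
rewrite oddM oddD /=; case: (odd d) => /=; by rewrite add0n -muln2.
Qed.
End S.

Unset Implicit Arguments.
Set Strict Implicit.

Theorem theorem1p2 (R : rcfType) (d : nat) (hd : (1 <= d)%N)
  (X : seq 'rV[R]_d.+1)
  (hXne : X != [::]) (hXuniq : uniq X) (hXS : all (@on_sphere R d.+1) X)
  (h2 : (size X)%:R ^- 2 * \sum_(x <- X) \sum_(y <- X) dotv x y ^+ 2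
        = (d.+1)%:R^-1)
  (h4 : (size X)%:R ^- 2 * \sum_(x <- X) \sum_(y <- X) dotv x y ^+ 4
        = 3%:R / ((d + 3)%:R * (d + 1)%:R))
  (* K : x |-> K_x, the reproducing element of Harm_2(S^d) at x *)
  (K : 'rV[R]_d.+1 -> 'M[R]_d.+1)
  (hKh : forall x, on_sphere x -> harm2 (K x))
  (hKrep : forall x, on_sphere x -> forall Q, harm2 Q ->
           harm_inner (K x) Q = (x *m Q *m x^T) 0 0)
  (* E : an orthonormal basis of Harm_2(S^d), D = d(d+3)/2 *)
  (E : 'I_((d * (d + 3))./2) -> 'M[R]_d.+1)
  (hEh : forall i, harm2 (E i))
  (hEon : forall i j, harm_inner (E i) (E j) = (i == j)%:R)
  (hEspan : forall Q, harm2 Q -> Q = \sum_i harm_inner Q (E i) *: E i) :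
  let G := fun x => (Num.sqrt (harm_inner (K x) (K x)))^-1 *: K x in
  let coord := fun x => \row_(i < (d * (d + 3))./2) harm_inner (G x) (E i) in
  spherical_design 3 ([seq coord x | x <- X] ++ [seq - coord x | x <- X]).
Proof.
move=> G coord.
have hn : (0 < d.+1)%N by [].
have hsph : forall x, x \in X -> on_sphere x by move=> x hx; move/allP: hXS => /(_ x hx).
have hsph1 : forall x, x \in X -> dotv x x = 1 by move=> x /hsph /eqP.
have hr : (1 <= d%:R :> R) by rewrite ler1n.
set c := ((d.+1 * (d.+1 + 2))%:R / 2 : R).
have hKe : forall x, x \in X -> K x = c *: Pm x.
  move=> x hx.
  exact: (K_eq hn (hsph x hx) (hKh x (hsph x hx)) (hKrep x (hsph x hx)) hEh hEspan).
have hKK : forall x y, x \in X -> y \in X ->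
    harm_inner (K x) (K y) = c * (dotv x y ^+ 2 - 1 / (d.+1)%:R).
  move=> x y hx hy; rewrite HI ?(hKh y (hsph y hy)) // !hKe // frobZ frobC frobZ frobC.
  rewrite frobPP ?hsph // /c.
  by field; apply/andP; split; apply/eqP => h0; lra.
set kap := c * (1 - 1 / (d.+1)%:R).
have hkap : kap = d%:R * (d%:R + 3) / 2.
  rewrite /kap /c natrM natrD -natr1.
  by field; apply/eqP => h0; lra.
have hkap0 : 0 < kap by rewrite hkap; apply: divr_gt0 => //; apply: mulr_gt0; lra.
have hKx : forall x, x \in X -> harm_inner (K x) (K x) = kap.
  by move=> x hx; rewrite hKK // hsph1 // expr1n.
have hs : (Num.sqrt kap)^-1 * (Num.sqrt kap)^-1 = kap^-1.
  by rewrite -invfM -expr2 sqr_sqrtr // ltW.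
have hdot : forall x y, x \in X -> y \in X ->
    dotv (coord x) (coord y) = ((d%:R + 1) * dotv x y ^+ 2 - 1) / d%:R.
  move=> x y hx hy.
  have hGy : harm2 (G y) by apply: harm2Z; apply: hKh; apply: hsph.
  have -> : dotv (coord x) (coord y) = harm_inner (G x) (G y).
    rewrite (parseval _ hEh hEspan hGy) /dotv; apply: eq_bigr => i _.
    by rewrite !mxE.
  rewrite /G HIZ ?hKx ?hKK //; last by apply: hKh; apply: hsph.
  rewrite hs /kap /c natrM natrD -natr1.
  by field; rewrite !lt0r_neq0 //; lra.
have -> : [seq - coord x | x <- X] = [seq - z | z <- [seq coord x | x <- X]].
  by rewrite -map_comp.
have hD2 := half_even d.
have hD : (0 < (d * (d + 3))./2)%N.
  have : (0 < d * (d + 3))%N by rewrite muln_gt0 hd addn3.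
  by move=> h; rewrite -hD2 muln_gt0 in h; case/andP: h.
have hDR : ((d * (d + 3))./2)%:R = d%:R * (d%:R + 3) / 2 :> R.
  have := congr1 (fun k => k%:R : R) hD2; rewrite /= !natrM natrD => h.
  have h20 : (2 : R) != 0 by rewrite pnatr_eq0.
  by apply: (mulIf h20); rewrite h; field.
apply: design_core => //.
- by case: X hXne {hsph hsph1 h2 h4 hXS hXuniq hKe hKK hKx hdot}.
- move=> z /mapP [x hx ->]; rewrite hdot // hsph1 // expr1n.
  by field; rewrite lt0r_neq0 //; lra.
rewrite size_map big_map.
rewrite (eq_big_seq (fun x => \sum_(y <- X) (((d%:R + 1) * dotv x y ^+ 2 - 1) / d%:R) ^+ 2)); last first.
  by move=> x hx; rewrite big_map; apply: eq_big_seq => y hy; rewrite hdot.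
have hN0 : (size X)%:R != 0 :> R by rewrite pnatr_eq0; case: X hXne {hsph hsph1 h2 h4 hXS hXuniq hKe hKK hKx hdot}.
rewrite (eq_bigr (fun x => \sum_(y <- X) ((d%:R + 1) ^+ 2 / d%:R ^+ 2 * dotv x y ^+ 4
    + (- 2 * (d%:R + 1) / d%:R ^+ 2) * dotv x y ^+ 2 + 1 / d%:R ^+ 2))); last first.
  by move=> x _; apply: eq_bigr => y _; field; rewrite lt0r_neq0 //; lra.
rewrite sum2_lin hDR.
have hS2 : \sum_(x <- X) \sum_(y <- X) dotv x y ^+ 2 = (size X)%:R ^+ 2 / (d%:R + 1).
  apply: (mulfI (invr_neq0 (expf_neq0 2 hN0))); rewrite h2 -natr1.
  by field; rewrite hN0 lt0r_neq0 //; lra.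
have hS4 : \sum_(x <- X) \sum_(y <- X) dotv x y ^+ 4 =
    (size X)%:R ^+ 2 * 3 / ((d%:R + 3) * (d%:R + 1)).
  apply: (mulfI (invr_neq0 (expf_neq0 2 hN0))); rewrite h4 !natrD.
  by field; rewrite hN0 !lt0r_neq0 //; lra.
rewrite hS2 hS4.
by field; rewrite hN0 !lt0r_neq0 //; lra.
Qed.
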